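(* Let $\langle A,B\rangle$ be a recursively inseparable pair. Then $\mathsf{G1}$ holds for the theory $U_{\langle A,B\rangle}$.
   Context: $\langle A,B\rangle$ is a recursively inseparable pair if $A,B$ are disjoint r.e. subsets of $\mathbb{N}$ and there is no recursive $X\subseteq\mathbb{N}$ with $A\subseteq X$ and $X\cap B=\emptyset$. $U_{\langle A,B\rangle}$ is the r.e. theory in the language $\{\mathbf 0,\mathbf S,\mathbf P\}$ ($\mathbf 0$ a constant, $\mathbf S$ unary function, $\mathbf P$ unary relation; $\overline n=\mathbf S^n\mathbf 0$) with axioms: $\overline m\neq\overline n$ for $m\neq n$; $\mathbf P(\overline n)$ for $n\in A$; $\neg\mathbf P(\overline n)$ for $n\in B$. ''$\mathsf{G1}$ holds for $T$'' means: for every recursively axiomatizable consistent theory $S$, if $T$ is interpretable in $S$ (relative interpretation) then $S$ is incomplete. *)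

(* Defs.v *)
From Stdlib Require Import List Arith.
Import ListNotations.

Inductive rf : Type :=
| rZ : rf
| rS : rf
| rP : nat -> rf
| rC : rf -> list rf -> rf
| rR : rf -> rf -> rf
| rM : rf -> rf.

Inductive eval : rf -> list nat -> nat -> Prop :=
| eZ v : eval rZ v 0
| eS v : eval rS v (S (hd 0 v))
| eP i v : eval (rP i) v (nth i v 0)
| eC f gs v ys y : evals gs v ys -> eval f ys y -> eval (rC f gs) v y
| eR0 f g v y : eval f v y -> eval (rR f g) (0 :: v) y
| eRS f g n v z y : eval (rR f g) (n :: v) z -> eval g (n :: z :: v) y ->
    eval (rR f g) (S n :: v) y
| eM f v n : eval f (n :: v) 0 ->
    (forall m, m < n -> exists k, eval f (m :: v) (S k)) -> eval (rM f) v n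
with evals : list rf -> list nat -> list nat -> Prop :=
| esnil v : evals nil v nil
| escons g gs v y ys : eval g v y -> evals gs v ys -> evals (g :: gs) v (y :: ys).

Definition recursive (X : nat -> Prop) : Prop :=
  exists f : rf, forall n, (X n -> eval f [n] 1) /\ (~ X n -> eval f [n] 0).

Definition re (X : nat -> Prop) : Prop :=
  exists f : rf, forall n, X n <-> exists y, eval f [n] y.

Definition rec_inseparable (A B : nat -> Prop) : Prop :=
  re A /\ re B /\ (forall n, ~ (A n /\ B n)) /\
  ~ (exists X, recursive X /\ (forall n, A n -> X n) /\ (forall n, X n -> ~ B n)).

(* function symbol f applied to a list of arguments; the pair
   (f, length args) identifies the symbol (index, arity) *)
Inductive term : Type :=
| var : nat -> term
| func : nat -> list term -> term.

Inductive form : Type :=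
| fal : form
| rel : nat -> list term -> form
| eq : term -> term -> form
| imp : form -> form -> form
| all : form -> form.

Definition neg (p : form) : form := imp p fal.
Definition tru : form := neg fal.
Definition and (p q : form) : form := neg (imp p (neg q)).
Definition ex (p : form) : form := neg (all (neg p)).
Definition exN (n : nat) (p : form) : form := Nat.iter n ex p.
Definition allN (n : nat) (p : form) : form := Nat.iter n all p.

Fixpoint tsubst (s : nat -> term) (t : term) : term :=
  match t with
  | var i => s i
  | func f ts => func f (map (tsubst s) ts)
  end.

Definition scons (t : term) (s : nat -> term) (i : nat) : term :=
  match i with 0 => t | S j => s j end.

Definition up (s : nat -> term) : nat -> term :=
  scons (var 0) (fun i => tsubst (fun k => var (S k)) (s i)).

Fixpoint fsubst (s : nat -> term) (p : form) : form :=
  match p with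
  | fal => fal
  | rel r ts => rel r (map (tsubst s) ts)
  | eq a b => eq (tsubst s a) (tsubst s b)
  | imp a b => imp (fsubst s a) (fsubst s b)
  | all a => all (fsubst (up s) a)
  end.

Definition shift (p : form) : form := fsubst (fun k => var (S k)) p.
Definition inst (t : term) (p : form) : form := fsubst (scons t var) p.

Fixpoint tbound (b : nat) (t : term) : Prop :=
  match t with
  | var i => i < b
  | func _ ts => (fix go (l : list term) : Prop :=
                   match l with nil => True | u :: l' => tbound b u /\ go l' end) ts
  end.

Fixpoint fbound (b : nat) (p : form) : Prop :=
  match p with
  | fal => True
  | rel _ ts => Forall (tbound b) ts
  | eq s t => tbound b s /\ tbound b t
  | imp a c => fbound b a /\ fbound b c
  | all a => fbound (S b) a
  end.

(* a language: which (index, arity) pairs are function / relation symbols *)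
Fixpoint tlang (lf : nat -> nat -> Prop) (t : term) : Prop :=
  match t with
  | var _ => True
  | func f ts => lf f (length ts) /\
      (fix go (l : list term) : Prop :=
         match l with nil => True | u :: l' => tlang lf u /\ go l' end) ts
  end.

Fixpoint flang (lf lr : nat -> nat -> Prop) (p : form) : Prop :=
  match p with
  | fal => True
  | rel r ts => lr r (length ts) /\ Forall (tlang lf) ts
  | eq s t => tlang lf s /\ tlang lf t
  | imp a c => flang lf lr a /\ flang lf lr c
  | all a => flang lf lr a
  end.

Inductive nd : list form -> form -> Prop :=
| ndAx G p : In p G -> nd G p
| ndII G p q : nd (p :: G) q -> nd G (imp p q)
| ndIE G p q : nd G (imp p q) -> nd G p -> nd G q
| ndAllI G p : nd (map shift G) p -> nd G (all p)
| ndAllE G p t : nd G (all p) -> nd G (inst t p)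
| ndExp G p : nd G fal -> nd G p
| ndDN G p : nd G (neg (neg p)) -> nd G p
| ndRefl G t : nd G (eq t t)
| ndLeib G s t p : nd G (eq s t) -> nd G (inst s p) -> nd G (inst t p).

Record theory : Type := Theory {
  th_fun : nat -> nat -> Prop;
  th_rel : nat -> nat -> Prop;
  th_ax  : form -> Prop
}.

Definition sentence_of (T : theory) (p : form) : Prop :=
  flang (th_fun T) (th_rel T) p /\ fbound 0 p.

Definition wf_theory (T : theory) : Prop :=
  forall p, th_ax T p -> sentence_of T p.

Definition provable (T : theory) (p : form) : Prop :=
  exists G, (forall q, In q G -> th_ax T q) /\ nd G p.

Definition consistent (T : theory) : Prop := ~ provable T fal.

Definition complete (T : theory) : Prop :=
  forall p, sentence_of T p -> provable T p \/ provable T (neg p).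

Definition pr (a b : nat) : nat := (a + b) * (a + b + 1) / 2 + b.

Fixpoint tcode (t : term) : nat :=
  match t with
  | var i => pr 0 i
  | func f ts => pr 1 (pr f ((fix go (l : list term) : nat :=
                              match l with nil => 0
                              | u :: l' => S (pr (tcode u) (go l')) end) ts))
  end.

Fixpoint lcode (l : list term) : nat :=
  match l with nil => 0 | u :: l' => S (pr (tcode u) (lcode l')) end.

Fixpoint fcode (p : form) : nat :=
  match p with
  | fal => pr 0 0
  | rel r ts => pr 1 (pr r (lcode ts))
  | eq s t => pr 2 (pr (tcode s) (tcode t))
  | imp a c => pr 3 (pr (fcode a) (fcode c))
  | all a => pr 4 (fcode a)
  end.

Definition rec_axiomatizable (T : theory) : Prop :=
  recursive (fun n => exists p, th_ax T p /\ fcode p = n).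

(* i_dom : domain formula, free variable 0.
   i_fun f n : graph of n-ary f, var 0 = value, var (j+1) = j-th argument.
   i_rel r n : n-ary relation r, var j = j-th argument.
   Equality is translated as equality. *)
Record interp : Type := Interp {
  i_dom : form;
  i_fun : nat -> nat -> form;
  i_rel : nat -> nat -> form
}.

Section Translation.
Variable I : interp.

(* ttr t off k : "the value of t (with its variables shifted by off) is var k" *)
Fixpoint ttr (t : term) (off k : nat) : form :=
  match t with
  | var i => eq (var (i + off)) (var k)
  | func f ts =>
      let n := length ts in
      exN n (and
        ((fix go (l : list term) (j : nat) : form :=
            match l with
            | nil => tru
            | u :: l' => and (ttr u (off + n) j) (go l' (S j))
            end) ts 0)
        (fsubst (scons (var (k + n)) var) (i_fun I f n)))
  end.

Fixpoint targs (ts : list term) (off j : nat) : form :=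
  match ts with
  | nil => tru
  | u :: l => and (ttr u off j) (targs l off (S j))
  end.

Fixpoint translate (p : form) : form :=
  match p with
  | fal => fal
  | rel r ts => let n := length ts in exN n (and (targs ts n 0) (i_rel I r n))
  | eq s t => ex (and (ttr s 1 0) (ttr t 1 0))
  | imp a c => imp (translate a) (translate c)
  | all a => all (imp (i_dom I) (translate a))
  end.

Fixpoint conjN (n : nat) (P : nat -> form) : form :=
  match n with 0 => tru | S m => and (conjN m P) (P m) end.

(* S-sentence expressing that i_fun f n defines a total function on the domain *)
Definition fun_total (f n : nat) : form :=
  allN n (imp (conjN n (fun j => inst (var j) (i_dom I)))
    (ex (and (i_dom I) (and (i_fun I f n)
      (all (imp (and (i_dom I)
                     (fsubst (scons (var 0) (fun j => var (S (S j)))) (i_fun I f n)))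
                (eq (var 0) (var 1)))))))).

End Translation.

Definition is_interpretation (T W : theory) (I : interp) : Prop :=
  flang (th_fun W) (th_rel W) (i_dom I) /\ fbound 1 (i_dom I) /\
  (forall f n, th_fun T f n ->
     flang (th_fun W) (th_rel W) (i_fun I f n) /\ fbound (S n) (i_fun I f n)) /\
  (forall r n, th_rel T r n ->
     flang (th_fun W) (th_rel W) (i_rel I r n) /\ fbound n (i_rel I r n)) /\
  provable W (ex (i_dom I)) /\
  (forall f n, th_fun T f n -> provable W (fun_total I f n)) /\
  (forall p, th_ax T p -> provable W (translate I p)).

Definition interpretable (T S : theory) : Prop :=
  exists I, is_interpretation T S I.

Definition G1 (T : theory) : Prop :=
  forall S : theory, wf_theory S -> rec_axiomatizable S -> consistent S ->
    interpretable T S -> ~ complete S.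

(* 0 = function symbol (0, arity 0); S = function symbol (1, arity 1);
   P = relation symbol (0, arity 1) *)
Definition zeroT : term := func 0 [].
Definition succT (t : term) : term := func 1 [t].
Definition numeral (n : nat) : term := Nat.iter n succT zeroT.

Definition U_AB (A B : nat -> Prop) : theory := {|
  th_fun := fun f n => (f = 0 /\ n = 0) \/ (f = 1 /\ n = 1);
  th_rel := fun r n => r = 0 /\ n = 1;
  th_ax := fun p =>
    (exists m n, m <> n /\ p = neg (eq (numeral m) (numeral n))) \/
    (exists n, A n /\ p = rel 0 [numeral n]) \/
    (exists n, B n /\ p = neg (rel 0 [numeral n]))
|}.

(* Main.v *)
Require Import Defs.
From Stdlib Require Import List Arith Lia Bool Classical ClassicalEpsilon.
Import ListNotations.

Definition cmp (F : list nat -> nat) : Prop := exists f, forall v, eval f v (F v).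

Lemma cmp_ext F G : (forall v, F v = G v) -> cmp F -> cmp G.
Proof. intros H [f Hf]. exists f. intro v. rewrite <- H. apply Hf. Qed.

Lemma cmp_proj i : cmp (fun v => nth i v 0).
Proof. exists (rP i). intro v. constructor. Qed.

Lemma cmp_S : cmp (fun v => S (nth 0 v 0)).
Proof. exists rS. intro v. replace (nth 0 v 0) with (hd 0 v) by (destruct v; reflexivity). constructor. Qed.

Lemma cmp_comp1 (h : nat -> nat) e : cmp (fun v => h (nth 0 v 0)) -> cmp e -> cmp (fun v => h (e v)).
Proof.
  intros [f Hf] [g Hg]. exists (rC f [g]). intro v.
  econstructor. - constructor. apply Hg. constructor. - apply (Hf [e v]).
Qed.

Lemma cmp_comp2 (h : nat -> nat -> nat) a b :
  cmp (fun v => h (nth 0 v 0) (nth 1 v 0)) -> cmp a -> cmp b -> cmp (fun v => h (a v) (b v)).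
Proof.
  intros [f Hf] [g Hg] [k Hk]. exists (rC f [g; k]). intro v.
  econstructor. - constructor. apply Hg. constructor. apply Hk. constructor. - apply (Hf [a v; b v]).
Qed.

Lemma cmp_comp3 (h : nat -> nat -> nat -> nat) a b c :
  cmp (fun v => h (nth 0 v 0) (nth 1 v 0) (nth 2 v 0)) -> cmp a -> cmp b -> cmp c ->
  cmp (fun v => h (a v) (b v) (c v)).
Proof.
  intros [f Hf] [g Hg] [k Hk] [l Hl]. exists (rC f [g; k; l]). intro v.
  econstructor. - repeat (constructor; [solve [eauto]|]). constructor. - apply (Hf [a v; b v; c v]).
Qed.

Lemma cmp_const c : cmp (fun _ => c).
Proof.
  induction c.
  - exists rZ. intro. constructor.
  - apply (cmp_comp1 S (fun _ => c)). apply cmp_S. exact IHc.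
Qed.

Definition Rec (b : nat -> nat) (s : nat -> nat -> nat -> nat) (n x : nat) : nat :=
  nat_rect (fun _ => nat) (b x) (fun k r => s k r x) n.

Lemma cmp_rec b s : cmp (fun v => b (nth 0 v 0)) ->
  cmp (fun v => s (nth 0 v 0) (nth 1 v 0) (nth 2 v 0)) ->
  cmp (fun v => Rec b s (nth 0 v 0) (nth 1 v 0)).
Proof.
  intros [f Hf] [g Hg]. exists (rC (rR f g) [rP 0; rP 1]). intro v.
  econstructor. - constructor. constructor. constructor. constructor. constructor.
  - generalize (nth 0 v 0) (nth 1 v 0). intros n x. induction n.
    + constructor. apply (Hf [x]).
    + econstructor. exact IHn. apply (Hg [n; Rec b s n x; x]).
Qed.

Definition b2n (b : bool) : nat := if b then 1 else 0.

Create HintDb cmpdb.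

Lemma cmp_swap2 (h : nat -> nat -> nat) : cmp (fun v => h (nth 0 v 0) (nth 1 v 0)) ->
  cmp (fun v => h (nth 1 v 0) (nth 0 v 0)).
Proof. intro H. apply (cmp_comp2 h); auto using cmp_proj. Qed.

Lemma cmp_add : cmp (fun v => nth 0 v 0 + nth 1 v 0).
Proof.
  eapply cmp_ext; [|apply (cmp_rec (fun x => x) (fun k r x => S r))].
  - intro v. unfold Rec. generalize (nth 0 v 0) (nth 1 v 0). intros n x; induction n; simpl; auto.
  - apply cmp_proj.
  - apply (cmp_comp1 S). apply cmp_S. apply cmp_proj.
Qed.
Lemma cmp_mul : cmp (fun v => nth 0 v 0 * nth 1 v 0).
Proof.
  eapply cmp_ext; [|apply (cmp_rec (fun x => 0) (fun k r x => r + x))].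
  - intro v. unfold Rec. generalize (nth 0 v 0) (nth 1 v 0). intros n x; induction n; cbn [nat_rect] in *; nia.
  - apply cmp_const.
  - apply (cmp_comp2 Nat.add). apply cmp_add. apply cmp_proj. apply cmp_proj.
Qed.
Lemma cmp_pred : cmp (fun v => pred (nth 0 v 0)).
Proof.
  eapply cmp_ext; [|apply (cmp_rec (fun x => 0) (fun k r x => k))].
  - intro v. unfold Rec. generalize (nth 0 v 0) (nth 1 v 0). intros n x; destruct n; simpl; auto.
  - apply cmp_const.
  - apply cmp_proj.
Qed.
Lemma cmp_sub : cmp (fun v => nth 0 v 0 - nth 1 v 0).
Proof.
  apply (cmp_swap2 (fun y x => x - y)).
  eapply cmp_ext; [|apply (cmp_rec (fun x => x) (fun k r x => pred r))].
  - intro v. unfold Rec. generalize (nth 0 v 0) (nth 1 v 0). intros n x; induction n; cbn [nat_rect] in *; lia.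
  - apply cmp_proj.
  - apply (cmp_comp1 pred). apply cmp_pred. apply cmp_proj.
Qed.
Global Hint Resolve cmp_S cmp_add cmp_mul cmp_pred cmp_sub : cmpdb.

Lemma cmp_if (b : list nat -> bool) x y : cmp (fun v => b2n (b v)) -> cmp x -> cmp y ->
  cmp (fun v => if b v then x v else y v).
Proof.
  intros Hb Hx Hy.
  apply (cmp_ext (fun v => b2n (b v) * x v + (1 - b2n (b v)) * y v)).
  - intro v. destruct (b v); cbn [b2n]; lia.
  - apply (cmp_comp2 Nat.add); auto with cmpdb.
    + apply (cmp_comp2 Nat.mul); auto with cmpdb.
    + apply (cmp_comp2 Nat.mul); auto with cmpdb.
      apply (cmp_comp2 Nat.sub); auto with cmpdb. apply cmp_const.
Qed.
Lemma cmp_andb (a b : list nat -> bool) : cmp (fun v => b2n (a v)) -> cmp (fun v => b2n (b v)) ->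
  cmp (fun v => b2n (a v && b v)).
Proof.
  intros. apply (cmp_ext (fun v => b2n (a v) * b2n (b v))).
  - intro v. destruct (a v), (b v); reflexivity.
  - apply (cmp_comp2 Nat.mul); auto with cmpdb.
Qed.
Lemma cmp_orb (a b : list nat -> bool) : cmp (fun v => b2n (a v)) -> cmp (fun v => b2n (b v)) ->
  cmp (fun v => b2n (a v || b v)).
Proof.
  intros. apply (cmp_ext (fun v => if a v then 1 else b2n (b v))).
  - intro v. destruct (a v), (b v); reflexivity.
  - apply cmp_if; auto. apply cmp_const.
Qed.
Lemma cmp_negb (a : list nat -> bool) : cmp (fun v => b2n (a v)) -> cmp (fun v => b2n (negb (a v))).
Proof.
  intros. apply (cmp_ext (fun v => 1 - b2n (a v))).
  - intro v. destruct (a v); reflexivity.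
  - apply (cmp_comp2 Nat.sub); auto with cmpdb. apply cmp_const.
Qed.
Lemma cmp_eqb a b : cmp a -> cmp b -> cmp (fun v => b2n (a v =? b v)).
Proof.
  intros. apply (cmp_ext (fun v => 1 - ((a v - b v) + (b v - a v)))).
  - intro v. destruct (Nat.eqb_spec (a v) (b v)); cbn [b2n]; lia.
  - apply (cmp_comp2 Nat.sub); auto with cmpdb. apply cmp_const.
    apply (cmp_comp2 Nat.add); auto with cmpdb; apply (cmp_comp2 Nat.sub); auto with cmpdb.
Qed.
Lemma cmp_leb a b : cmp a -> cmp b -> cmp (fun v => b2n (a v <=? b v)).
Proof.
  intros. apply (cmp_ext (fun v => 1 - (a v - b v))).
  - intro v. destruct (Nat.leb_spec (a v) (b v)); cbn [b2n]; lia.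
  - apply (cmp_comp2 Nat.sub); auto with cmpdb. apply cmp_const.
    apply (cmp_comp2 Nat.sub); auto with cmpdb.
Qed.
Lemma cmp_ltb a b : cmp a -> cmp b -> cmp (fun v => b2n (a v <? b v)).
Proof.
  intros. apply (cmp_ext (fun v => 1 - (S (a v) - b v))).
  - intro v. destruct (Nat.ltb_spec (a v) (b v)); cbn [b2n]; lia.
  - apply (cmp_comp2 Nat.sub); auto with cmpdb. apply cmp_const.
    apply (cmp_comp2 Nat.sub); auto with cmpdb. apply (cmp_comp1 S); auto with cmpdb.
Qed.
Lemma cmp_compb1 (h : nat -> bool) a : cmp (fun v => b2n (h (nth 0 v 0))) -> cmp a ->
  cmp (fun v => b2n (h (a v))).
Proof. intros H1 H2. exact (cmp_comp1 (fun x => b2n (h x)) a H1 H2). Qed.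
Lemma cmp_compb2 (h : nat -> nat -> bool) a b : cmp (fun v => b2n (h (nth 0 v 0) (nth 1 v 0))) -> cmp a -> cmp b ->
  cmp (fun v => b2n (h (a v) (b v))).
Proof. intros H1 H2 H3. exact (cmp_comp2 (fun x y => b2n (h x y)) a b H1 H2 H3). Qed.
Lemma cmp_compb3 (h : nat -> nat -> nat -> bool) a b c : cmp (fun v => b2n (h (nth 0 v 0) (nth 1 v 0) (nth 2 v 0))) -> cmp a -> cmp b -> cmp c ->
  cmp (fun v => b2n (h (a v) (b v) (c v))).
Proof. intros H1 H2 H3 H4. exact (cmp_comp3 (fun x y z => b2n (h x y z)) a b c H1 H2 H3 H4). Qed.

Ltac cmpt :=
  match goal with
  | |- cmp (fun v => nth ?i v 0) => apply cmp_proj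
  | |- cmp (fun _ => ?c) => apply cmp_const
  | |- cmp (fun v => if @?b v then @?x v else @?y v) => apply (cmp_if b x y); cmpt
  | |- cmp (fun v => b2n (@?a v && @?b v)) => apply (cmp_andb a b); cmpt
  | |- cmp (fun v => b2n (@?a v || @?b v)) => apply (cmp_orb a b); cmpt
  | |- cmp (fun v => b2n (negb (@?a v))) => apply (cmp_negb a); cmpt
  | |- cmp (fun v => b2n (@?a v =? @?b v)) => apply (cmp_eqb a b); cmpt
  | |- cmp (fun v => b2n (@?a v <=? @?b v)) => apply (cmp_leb a b); cmpt
  | |- cmp (fun v => b2n (@?a v <? @?b v)) => apply (cmp_ltb a b); cmpt
  | |- cmp (fun v => b2n (?h (@?a v) (@?b v) (@?c v))) =>
      apply (cmp_compb3 h a b c); [solve [eauto with cmpdb] | cmpt | cmpt | cmpt]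
  | |- cmp (fun v => b2n (?h (@?a v) (@?b v))) =>
      apply (cmp_compb2 h a b); [solve [eauto with cmpdb] | cmpt | cmpt]
  | |- cmp (fun v => b2n (?h (@?a v))) =>
      apply (cmp_compb1 h a); [solve [eauto with cmpdb] | cmpt]
  | |- cmp (fun v => ?h (@?a v) (@?b v) (@?c v)) =>
      apply (cmp_comp3 h a b c); [solve [eauto with cmpdb] | cmpt | cmpt | cmpt]
  | |- cmp (fun v => ?h (@?a v) (@?b v)) =>
      apply (cmp_comp2 h a b); [solve [eauto with cmpdb] | cmpt | cmpt]
  | |- cmp (fun v => ?h (@?a v)) =>
      apply (cmp_comp1 h a); [solve [eauto with cmpdb] | cmpt]
  end.

Lemma test1 : cmp (fun v => if (nth 0 v 0 <? 3) && (nth 1 v 0 =? 2) then nth 0 v 0 * 5 + 1 else pred (nth 2 v 0)).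
Proof. cmpt. Qed.

Fixpoint tri (s : nat) : nat := match s with 0 => 0 | S k => tri k + S k end.

Lemma tri_2 s : 2 * tri s = s * (s + 1).
Proof. induction s; simpl tri; nia. Qed.

Lemma pr_tri a b : pr a b = tri (a + b) + b.
Proof.
  unfold pr. f_equal. rewrite <- tri_2. rewrite Nat.mul_comm. apply Nat.div_mul. lia.
Qed.

Lemma tri_mono a b : a <= b -> tri a <= tri b.
Proof. induction 1; simpl; lia. Qed.
Lemma tri_ge s : s <= tri s.
Proof. induction s; simpl; lia. Qed.

Definition diag (c : nat) : nat :=
  Rec (fun _ => 0) (fun k r _ => if tri (S r) <=? S k then S r else r) c 0.

Lemma diag_spec c : tri (diag c) <= c < tri (S (diag c)).
Proof.
  unfold diag, Rec. induction c; cbn [nat_rect tri] in *.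
  - lia.
  - set (d := nat_rect _ _ _ c) in *.
    destruct (Nat.leb_spec (tri d + S d) (S c)); cbn [tri] in *; lia.
Qed.

Lemma diag_uniq c d : tri d <= c < tri (S d) -> diag c = d.
Proof.
  intros H. pose proof (diag_spec c).
  destruct (Nat.lt_trichotomy (diag c) d) as [Hl|[He|Hl]]; auto.
  - assert (tri (S (diag c)) <= tri d) by (apply tri_mono; lia). lia.
  - assert (tri (S d) <= tri (diag c)) by (apply tri_mono; lia). lia.
Qed.

Definition p2 (c : nat) : nat := c - tri (diag c).
Definition p1 (c : nat) : nat := diag c - p2 c.

Lemma p1_pr a b : p1 (pr a b) = a.
Proof.
  unfold p1, p2. rewrite pr_tri.
  rewrite (diag_uniq _ (a + b)). lia. cbn [tri]. lia.
Qed.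
Lemma p2_pr a b : p2 (pr a b) = b.
Proof.
  unfold p2. rewrite pr_tri.
  rewrite (diag_uniq _ (a + b)). lia. cbn [tri]. lia.
Qed.
Lemma pr_surj c : pr (p1 c) (p2 c) = c.
Proof.
  pose proof (diag_spec c). cbn [tri] in H. rewrite pr_tri. unfold p1, p2.
  replace (diag c - (c - tri (diag c)) + (c - tri (diag c))) with (diag c) by lia. lia.
Qed.
Lemma pr_inj a b a' b' : pr a b = pr a' b' -> a = a' /\ b = b'.
Proof. intro H. split; [rewrite <- (p1_pr a b), H, p1_pr | rewrite <- (p2_pr a b), H, p2_pr]; auto. Qed.

Lemma pr_ge_l a b : a <= pr a b.
Proof. rewrite pr_tri. pose proof (tri_ge (a+b)). lia. Qed.
Lemma pr_ge_r a b : b <= pr a b.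
Proof. rewrite pr_tri. lia. Qed.
Lemma pr_gt_r a b : 1 <= a -> b < pr a b.
Proof. intro. rewrite pr_tri. pose proof (tri_ge (a+b)). lia. Qed.
Lemma p1_le c : p1 c <= c.
Proof. rewrite <- (pr_surj c) at 2. apply pr_ge_l. Qed.
Lemma p2_le c : p2 c <= c.
Proof. rewrite <- (pr_surj c) at 2. apply pr_ge_r. Qed.
Lemma p2_lt c : 1 <= p1 c -> p2 c < c.
Proof. intro. rewrite <- (pr_surj c) at 2. apply pr_gt_r; auto. Qed.
Lemma pr00 : pr 0 0 = 0.
Proof. reflexivity. Qed.

Lemma cmp_tri : cmp (fun v => tri (nth 0 v 0)).
Proof.
  eapply cmp_ext; [|apply (cmp_rec (fun _ => 0) (fun k r _ => r + S k))].
  - intro v. unfold Rec. generalize (nth 0 v 0) (nth 1 v 0). intros n x; induction n; cbn [nat_rect tri] in *; lia.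
  - cmpt.
  - cmpt.
Qed.
Global Hint Resolve cmp_tri : cmpdb.
Lemma cmp_diag : cmp (fun v => diag (nth 0 v 0)).
Proof.
  unfold diag. apply (cmp_comp2 (Rec (fun _ => 0) (fun k r _ => if tri (S r) <=? S k then S r else r))).
  apply cmp_rec; cmpt. cmpt. cmpt.
Qed.
Global Hint Resolve cmp_diag : cmpdb.
Lemma cmp_p2 : cmp (fun v => p2 (nth 0 v 0)).
Proof. unfold p2. cmpt. Qed.
Global Hint Resolve cmp_p2 : cmpdb.
Lemma cmp_p1 : cmp (fun v => p1 (nth 0 v 0)).
Proof. unfold p1. cmpt. Qed.
Global Hint Resolve cmp_p1 : cmpdb.
Lemma cmp_pr : cmp (fun v => pr (nth 0 v 0) (nth 1 v 0)).
Proof. eapply cmp_ext. intro v. symmetry. apply pr_tri. cmpt. Qed.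
Global Hint Resolve cmp_pr : cmpdb.

Global Opaque pr p1 p2.

Definition hdc (L : nat) : nat := p1 (pred L).
Definition tlc (L : nat) : nat := p2 (pred L).
Definition itl (k L : nat) : nat := Rec (fun x => x) (fun _ r _ => tlc r) k L.
Lemma cmp_itl : cmp (fun v => itl (nth 0 v 0) (nth 1 v 0)).
Proof. unfold itl. apply cmp_rec; unfold tlc; cmpt. Qed.
Global Hint Resolve cmp_itl : cmpdb.
Lemma itl_S k L : itl (S k) L = itl k (tlc L).
Proof. unfold itl, Rec. induction k; cbn [nat_rect] in *; congruence. Qed.

Definition lk (c T j : nat) : nat := hdc (itl (c - 1 - j) T).
Lemma cmp_lk : cmp (fun v => lk (nth 0 v 0) (nth 1 v 0) (nth 2 v 0)).
Proof. unfold lk, hdc. cmpt. Qed.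
Global Hint Resolve cmp_lk : cmpdb.

Fixpoint tab (F : nat -> nat -> nat) (n : nat) : nat :=
  match n with 0 => 0 | S k => S (pr (F k (tab F k)) (tab F k)) end.
Definition cov F c := F c (tab F c).

Lemma lk_tab F c j : j < c -> lk c (tab F c) j = cov F j.
Proof.
  induction c; intro H; [lia|].
  unfold lk. destruct (Nat.eq_dec j c).
  - subst. replace (S c - 1 - c) with 0 by lia. unfold itl, Rec; cbn [nat_rect tab].
    unfold hdc. cbn [pred]. rewrite p1_pr. reflexivity.
  - replace (S c - 1 - j) with (S (c - 1 - j)) by lia. rewrite itl_S. cbn [tab].
    unfold tlc. cbn [pred]. rewrite p2_pr. apply IHc. lia.
Qed.

Lemma cmp_cov F : cmp (fun v => F (nth 0 v 0) (nth 1 v 0)) -> cmp (fun v => cov F (nth 0 v 0)).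
Proof.
  intro HF.
  assert (Ht : cmp (fun v => Rec (fun _ => 0) (fun k r _ => S (pr (F k r) r)) (nth 0 v 0) (nth 1 v 0))).
  { apply cmp_rec; cmpt. }
  assert (E : forall n x, Rec (fun _ => 0) (fun k r _ => S (pr (F k r) r)) n x = tab F n).
  { intros n x. unfold Rec. induction n; cbn [nat_rect tab]; congruence. }
  apply (cmp_ext (fun v => F (nth 0 v 0) (Rec (fun _ => 0) (fun k r _ => S (pr (F k r) r)) (nth 0 v 0) 0))).
  intro v. unfold cov. rewrite E. reflexivity.
  apply (cmp_comp2 F); auto. cmpt. Qed.

Definition lc (l : list nat) : nat := fold_right (fun x r => S (pr x r)) 0 l.

Fixpoint lst (n L : nat) : list nat :=
  match n with 0 => [] | S n' => match L with 0 => [] | S c => p1 c :: lst n' (p2 c) end end.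
Definition lstd L := lst L L.

Lemma lst_fuel n m L : L <= n -> L <= m -> lst n L = lst m L.
Proof.
  revert m L. induction n; intros m L H1 H2.
  - assert (L = 0) by lia. subst. destruct m; reflexivity.
  - destruct m. assert (L = 0) by lia. subst. reflexivity.
    destruct L. reflexivity. cbn [lst]. f_equal. apply IHn; pose proof (p2_le L); lia.
Qed.
Lemma lstd_0 : lstd 0 = [].
Proof. reflexivity. Qed.
Lemma lstd_S c : lstd (S c) = p1 c :: lstd (p2 c).
Proof. unfold lstd. cbn [lst]. f_equal. apply lst_fuel; pose proof (p2_le c); lia. Qed.
Lemma lstd_lc l : lstd (lc l) = l.
Proof. induction l; simpl. reflexivity. rewrite lstd_S, p1_pr, p2_pr, IHl. reflexivity. Qed.
Lemma lstd_lt L x : In x (lstd L) -> x < L.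
Proof.
  induction L as [L IH] using (well_founded_induction lt_wf). destruct L. simpl. tauto.
  rewrite lstd_S. intros [<-|H]. pose proof (p1_le L); lia.
  pose proof (p2_le L). specialize (IH (p2 L) ltac:(lia) H). lia.
Qed.

Lemma term_ind' (P : term -> Prop) : (forall i, P (var i)) ->
  (forall f ts, Forall P ts -> P (func f ts)) -> forall t, P t.
Proof.
  intros Hv Hf. fix IH 1. intros [i|f ts]. apply Hv. apply Hf.
  induction ts as [|u ts IHts]. constructor. constructor. apply IH. apply IHts.
Qed.

Lemma lcode_eq ts : lcode ts = lc (map tcode ts).
Proof. induction ts; simpl; congruence. Qed.
Lemma tcode_func f ts : tcode (func f ts) = pr 1 (pr f (lc (map tcode ts))).
Proof. simpl. f_equal. f_equal. induction ts; simpl; congruence. Qed.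
Lemma tcode_var i : tcode (var i) = pr 0 i.
Proof. reflexivity. Qed.

Fixpoint decT (n c : nat) : term :=
  match n with 0 => var 0 | S n' =>
    if p1 c =? 0 then var (p2 c)
    else if p1 c =? 1 then func (p1 (p2 c)) (map (decT n') (lstd (p2 (p2 c))))
    else var 0 end.
Definition dT c := decT (S c) c.

Lemma decT_fuel n m c : c < n -> c < m -> decT n c = decT m c.
Proof.
  revert m c. induction n; intros m c H1 H2. lia. destruct m. lia.
  cbn [decT]. destruct (p1 c =? 0) eqn:E0. reflexivity.
  destruct (p1 c =? 1) eqn:E1; [|reflexivity]. apply Nat.eqb_eq in E1.
  f_equal. apply map_ext_in. intros x Hx. apply lstd_lt in Hx.
  pose proof (p2_le (p2 c)). pose proof (p2_lt c ltac:(lia)). apply IHn; lia.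
Qed.
Lemma dT_var c : p1 c = 0 -> dT c = var (p2 c).
Proof. intro H. unfold dT. cbn [decT]. rewrite H. reflexivity. Qed.
Lemma dT_func c : p1 c = 1 -> dT c = func (p1 (p2 c)) (map dT (lstd (p2 (p2 c)))).
Proof.
  intro H. unfold dT at 1. cbn [decT]. rewrite H. cbn [Nat.eqb]. f_equal. apply map_ext_in. intros x Hx.
  apply lstd_lt in Hx. pose proof (p2_le (p2 c)). pose proof (p2_lt c ltac:(lia)). unfold dT. apply decT_fuel; lia.
Qed.
Lemma dT_tcode t : dT (tcode t) = t.
Proof.
  induction t using term_ind'.
  - rewrite tcode_var, dT_var, p2_pr; auto. apply p1_pr.
  - rewrite tcode_func, dT_func, !p2_pr, p1_pr, lstd_lc, map_map; [|apply p1_pr].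
    f_equal. induction H; simpl; congruence.
Qed.
Lemma dL_lc ts : map dT (lstd (lc (map tcode ts))) = ts.
Proof. rewrite lstd_lc, map_map. induction ts; simpl; auto. rewrite dT_tcode; congruence. Qed.

Fixpoint decF (n c : nat) : form :=
  match n with 0 => fal | S n' =>
    if p1 c =? 1 then rel (p1 (p2 c)) (map dT (lstd (p2 (p2 c))))
    else if p1 c =? 2 then eq (dT (p1 (p2 c))) (dT (p2 (p2 c)))
    else if p1 c =? 3 then imp (decF n' (p1 (p2 c))) (decF n' (p2 (p2 c)))
    else if p1 c =? 4 then all (decF n' (p2 c))
    else fal end.
Definition dF c := decF (S c) c.

Lemma decF_fuel n m c : c < n -> c < m -> decF n c = decF m c.
Proof.
  revert m c. induction n; intros m c H1 H2. lia. destruct m. lia.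
  cbn [decF]. destruct (p1 c =? 1) eqn:E1. reflexivity.
  destruct (p1 c =? 2) eqn:E2. reflexivity.
  destruct (p1 c =? 3) eqn:E3. apply Nat.eqb_eq in E3.
  pose proof (p1_le (p2 c)). pose proof (p2_le (p2 c)). pose proof (p2_lt c ltac:(lia)).
  f_equal; apply IHn; lia.
  destruct (p1 c =? 4) eqn:E4; [|reflexivity]. apply Nat.eqb_eq in E4.
  pose proof (p2_lt c ltac:(lia)). f_equal; apply IHn; lia.
Qed.

Lemma dF_0 c : p1 c = 0 -> dF c = fal.
Proof. intro H. unfold dF. cbn [decF]. rewrite H. reflexivity. Qed.
Lemma dF_rel c : p1 c = 1 -> dF c = rel (p1 (p2 c)) (map dT (lstd (p2 (p2 c)))).
Proof. intro H. unfold dF. cbn [decF]. rewrite H. reflexivity. Qed.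
Lemma dF_eq c : p1 c = 2 -> dF c = eq (dT (p1 (p2 c))) (dT (p2 (p2 c))).
Proof. intro H. unfold dF. cbn [decF]. rewrite H. reflexivity. Qed.
Lemma dF_imp c : p1 c = 3 -> dF c = imp (dF (p1 (p2 c))) (dF (p2 (p2 c))).
Proof.
  intro H. unfold dF at 1. cbn [decF]. rewrite H. cbn [Nat.eqb]. unfold dF.
  pose proof (p1_le (p2 c)). pose proof (p2_le (p2 c)). pose proof (p2_lt c ltac:(lia)).
  f_equal; apply decF_fuel; lia.
Qed.
Lemma dF_all c : p1 c = 4 -> dF c = all (dF (p2 c)).
Proof.
  intro H. unfold dF at 1. cbn [decF]. rewrite H. cbn [Nat.eqb]. unfold dF.
  pose proof (p2_lt c ltac:(lia)). f_equal; apply decF_fuel; lia.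
Qed.

Lemma fcode_rel r ts : fcode (rel r ts) = pr 1 (pr r (lc (map tcode ts))).
Proof. simpl. rewrite lcode_eq. reflexivity. Qed.

Lemma dF_fcode p : dF (fcode p) = p.
Proof.
  induction p; cbn [fcode].
  - apply dF_0. apply p1_pr.
  - rewrite dF_rel, !p2_pr, p1_pr, lcode_eq, dL_lc; auto. apply p1_pr.
  - rewrite dF_eq, !p2_pr, p1_pr, !dT_tcode; auto. apply p1_pr.
  - rewrite dF_imp, !p2_pr, p1_pr; [|apply p1_pr]. congruence.
  - rewrite dF_all, !p2_pr; [|apply p1_pr]. congruence.
Qed.

Lemma tsubst_ext s s' t : (forall i, s i = s' i) -> tsubst s t = tsubst s' t.
Proof.
  intro H. induction t using term_ind'. apply H. simpl. f_equal.
  induction H0; simpl; congruence.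
Qed.
Lemma up_ext s s' : (forall i, s i = s' i) -> forall i, up s i = up s' i.
Proof. intros H [|i]; simpl; auto. unfold up, scons. rewrite H. reflexivity. Qed.
Lemma fsubst_ext p : forall s s', (forall i, s i = s' i) -> fsubst s p = fsubst s' p.
Proof.
  induction p; intros s s' H; simpl; f_equal; auto.
  - apply map_ext. intro. apply tsubst_ext; auto.
  - apply tsubst_ext; auto.
  - apply tsubst_ext; auto.
  - apply IHp. apply up_ext. auto.
Qed.

Definition semD (d : nat) (i : nat) : term :=
  if p1 d =? 0 then (if i <? p2 d then var i else var (S i))
  else if p1 d =? 1 then
    (if i <? p1 (p2 d) then var i else if i =? p1 (p2 d) then dT (p2 (p2 d)) else var (pred i))
  else var i.

Lemma semD_lift_up m i : up (semD (pr 0 m)) i = semD (pr 0 (S m)) i.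
Proof.
  unfold semD. rewrite !p1_pr, !p2_pr. cbn [Nat.eqb].
  destruct i; simpl. reflexivity. unfold up, scons.
  destruct (Nat.ltb_spec i m); destruct (Nat.ltb_spec (S i) (S m)); simpl; try reflexivity; lia.
Qed.
Lemma semD_inst_up m u u' i : dT u' = tsubst (fun k => var (S k)) (dT u) ->
  up (semD (pr 1 (pr m u))) i = semD (pr 1 (pr (S m) u')) i.
Proof.
  intro Hu. unfold semD. repeat rewrite ?p1_pr, ?p2_pr. cbn [Nat.eqb].
  destruct i; simpl. reflexivity. unfold up, scons.
  destruct (Nat.ltb_spec i m); destruct (Nat.ltb_spec (S i) (S m)); try lia. reflexivity.
  destruct (Nat.eqb_spec i m); destruct (Nat.eqb_spec (S i) (S m)); try lia. auto.
  simpl. destruct i. lia. reflexivity.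
Qed.
Lemma semD_shift i : semD (pr 0 0) i = var (S i).
Proof. unfold semD. rewrite p1_pr, p2_pr. reflexivity. Qed.
Lemma semD_inst0 t i : semD (pr 1 (pr 0 (tcode t))) i = scons t var i.
Proof.
  unfold semD. repeat rewrite ?p1_pr, ?p2_pr. cbn [Nat.eqb].
  destruct i; simpl. apply dT_tcode. reflexivity.
Qed.

Definition fm c := p1 (p1 c).
Definition rl c := p2 (p1 c).
Definition cl c := p1 (p2 c).
Definition ch1 c := p1 (p2 (p2 c)).
Definition ch2 c := p1 (p2 (p2 (p2 c))).
Definition ch3 c := p1 (p2 (p2 (p2 (p2 c)))).
Definition ch4 c := p2 (p2 (p2 (p2 (p2 c)))).
Definition node f r C a b x y := pr (pr f r) (pr C (pr a (pr b (pr x y)))).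

Definition ok c T j := lk c T j =? 1.
Definition cc (c T j f C : nat) : bool := (fm j =? f) && ok c T j && (cl j =? C).

Section Checker.
Variable axb : nat -> bool.

Definition chkND c T :=
  let G := p1 (cl c) in let p := p2 (cl c) in
  let c1 := ch1 c in let c2 := ch2 c in let c3 := ch3 c in let c4 := ch4 c in
  ((rl c =? 0) && cc c T c1 2 (pr p G)) ||
  ((rl c =? 1) && (p1 p =? 3) && cc c T c1 1 (pr (S (pr (p1 (p2 p)) G)) (p2 (p2 p)))) ||
  ((rl c =? 2) && cc c T c2 1 (pr G (p2 (cl c2))) && cc c T c1 1 (pr G (pr 3 (pr (p2 (cl c2)) p)))) ||
  ((rl c =? 3) && (p1 p =? 4) && cc c T c1 1 (pr (p1 (cl c1)) (p2 p)) && cc c T c2 3 (pr G (p1 (cl c1)))) ||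
  ((rl c =? 4) && cc c T c1 1 (pr G (pr 4 (p2 (p2 (cl c1))))) && (p1 (p1 (cl c2)) =? 1)
     && (p1 (p2 (p1 (cl c2))) =? 0) && cc c T c2 6 (pr (p1 (cl c2)) (pr (p2 (p2 (cl c1))) p))) ||
  ((rl c =? 5) && cc c T c1 1 (pr G 0)) ||
  ((rl c =? 6) && cc c T c1 1 (pr G (pr 3 (pr (pr 3 (pr p 0)) 0)))) ||
  ((rl c =? 7) && (p1 p =? 2) && (p1 (p2 p) =? p2 (p2 p))) ||
  ((rl c =? 8) && cc c T c1 1 (pr G (pr 2 (pr (p1 (p2 (p2 (cl c1)))) (p2 (p2 (p2 (cl c1)))))))
     && cc c T c2 1 (pr G (p2 (cl c2)))
     && cc c T c3 6 (pr (pr 1 (pr 0 (p1 (p2 (p2 (cl c1)))))) (pr (p1 (p2 (cl c3))) (p2 (cl c2))))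
     && cc c T c4 6 (pr (pr 1 (pr 0 (p2 (p2 (p2 (cl c1)))))) (pr (p1 (p2 (cl c3))) p))).

Definition chkMEM c T :=
  let x := p1 (cl c) in let L := p2 (cl c) in
  ((rl c =? 0) && (0 <? L) && (p1 (pred L) =? x)) ||
  ((rl c =? 1) && (0 <? L) && cc c T (ch1 c) 2 (pr x (p2 (pred L)))).

Definition chkMS c T :=
  let L := p1 (cl c) in let L' := p2 (cl c) in
  ((rl c =? 0) && (L =? 0) && (L' =? 0)) ||
  ((rl c =? 1) && (0 <? L) && (0 <? L') && cc c T (ch1 c) 6 (pr (pr 0 0) (pr (p1 (pred L)) (p1 (pred L'))))
     && cc c T (ch2 c) 3 (pr (p2 (pred L)) (p2 (pred L')))).

Definition chkTS c T :=
  let d := p1 (cl c) in let a := p1 (p2 (cl c)) in let b := p2 (p2 (cl c)) in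
  ((rl c =? 0) && (p1 a =? 0) &&
    (((p1 d =? 0) && (b =? pr 0 (if p2 a <? p2 d then p2 a else S (p2 a)))) ||
     ((p1 d =? 1) && (if p2 a <? p1 (p2 d) then b =? pr 0 (p2 a)
                      else if p2 a =? p1 (p2 d) then b =? p2 (p2 d) else b =? pr 0 (pred (p2 a)))))) ||
  ((rl c =? 1) && (p1 a =? 1) && (p1 b =? 1) && (p1 (p2 a) =? p1 (p2 b))
     && cc c T (ch1 c) 5 (pr d (pr (p2 (p2 a)) (p2 (p2 b))))).

Definition chkLS c T :=
  let d := p1 (cl c) in let a := p1 (p2 (cl c)) in let b := p2 (p2 (cl c)) in
  ((rl c =? 0) && (a =? 0) && (b =? 0)) ||
  ((rl c =? 1) && (0 <? a) && (0 <? b) && cc c T (ch1 c) 4 (pr d (pr (p1 (pred a)) (p1 (pred b))))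
     && cc c T (ch2 c) 5 (pr d (pr (p2 (pred a)) (p2 (pred b))))).

Definition chkFS c T :=
  let d := p1 (cl c) in let a := p1 (p2 (cl c)) in let b := p2 (p2 (cl c)) in
  ((rl c =? 0) && (a =? 0) && (b =? 0)) ||
  ((rl c =? 1) && (p1 a =? 1) && (p1 b =? 1) && (p1 (p2 a) =? p1 (p2 b))
     && cc c T (ch1 c) 5 (pr d (pr (p2 (p2 a)) (p2 (p2 b))))) ||
  ((rl c =? 2) && (p1 a =? 2) && (p1 b =? 2)
     && cc c T (ch1 c) 4 (pr d (pr (p1 (p2 a)) (p1 (p2 b))))
     && cc c T (ch2 c) 4 (pr d (pr (p2 (p2 a)) (p2 (p2 b))))) ||
  ((rl c =? 3) && (p1 a =? 3) && (p1 b =? 3)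
     && cc c T (ch1 c) 6 (pr d (pr (p1 (p2 a)) (p1 (p2 b))))
     && cc c T (ch2 c) 6 (pr d (pr (p2 (p2 a)) (p2 (p2 b))))) ||
  ((rl c =? 4) && (p1 a =? 4) && (p1 b =? 4) &&
    (((p1 d =? 0) && cc c T (ch1 c) 6 (pr (pr 0 (S (p2 d))) (pr (p2 a) (p2 b)))) ||
     ((p1 d =? 1) && cc c T (ch2 c) 4 (pr (pr 0 0) (pr (p2 (p2 d)) (p2 (p2 (cl (ch2 c))))))
        && cc c T (ch1 c) 6 (pr (pr 1 (pr (S (p1 (p2 d))) (p2 (p2 (cl (ch2 c)))))) (pr (p2 a) (p2 b)))))).

Definition chkAX c T :=
  ((rl c =? 0) && (cl c =? 0)) ||
  ((rl c =? 1) && (0 <? cl c) && axb (p1 (pred (cl c))) && cc c T (ch1 c) 7 (p2 (pred (cl c)))).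

Definition chkTOP c T := cc c T (ch1 c) 1 (cl c) && cc c T (ch2 c) 7 (p1 (cl c)).

Definition chkb c T :=
  ((fm c =? 1) && chkND c T) || ((fm c =? 2) && chkMEM c T) || ((fm c =? 3) && chkMS c T) ||
  ((fm c =? 4) && chkTS c T) || ((fm c =? 5) && chkLS c T) || ((fm c =? 6) && chkFS c T) ||
  ((fm c =? 7) && chkAX c T) || ((fm c =? 8) && chkTOP c T).

Definition Fv c T := b2n (chkb c T).
Definition vb c := chkb c (tab Fv c).

Hypothesis Hax : cmp (fun v => b2n (axb (nth 0 v 0))).

Lemma cmp_b2n_if (b : list nat -> bool) x y : cmp (fun v => if b v then b2n (x v) else b2n (y v)) ->
  cmp (fun v => b2n (if b v then x v else y v)).
Proof. apply cmp_ext. intro v. destruct (b v); reflexivity. Qed.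

Ltac cmpt2 :=
  match goal with
  | |- cmp (fun v => b2n (if @?b v then @?x v else @?y v)) => apply (cmp_b2n_if b x y); apply (cmp_if b); cmpt2
  | |- cmp (fun v => nth ?i v 0) => apply cmp_proj
  | |- cmp (fun _ => ?c) => apply cmp_const
  | |- cmp (fun v => if @?b v then @?x v else @?y v) => apply (cmp_if b x y); cmpt2
  | |- cmp (fun v => b2n (@?a v && @?b v)) => apply (cmp_andb a b); cmpt2
  | |- cmp (fun v => b2n (@?a v || @?b v)) => apply (cmp_orb a b); cmpt2
  | |- cmp (fun v => b2n (@?a v =? @?b v)) => apply (cmp_eqb a b); cmpt2
  | |- cmp (fun v => b2n (@?a v <? @?b v)) => apply (cmp_ltb a b); cmpt2
  | |- cmp (fun v => b2n (axb (@?a v))) => apply (cmp_compb1 axb a); [exact Hax | cmpt2]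
  | |- cmp (fun v => lk (@?a v) (@?b v) (@?c v)) => apply (cmp_comp3 lk a b c); [exact cmp_lk | cmpt2 | cmpt2 | cmpt2]
  | |- cmp (fun v => pr (@?a v) (@?b v)) => apply (cmp_comp2 pr a b); [exact cmp_pr | cmpt2 | cmpt2]
  | |- cmp (fun v => p1 (@?a v)) => apply (cmp_comp1 p1 a); [exact cmp_p1 | cmpt2]
  | |- cmp (fun v => p2 (@?a v)) => apply (cmp_comp1 p2 a); [exact cmp_p2 | cmpt2]
  | |- cmp (fun v => pred (@?a v)) => apply (cmp_comp1 pred a); [exact cmp_pred | cmpt2]
  | |- cmp (fun v => S (@?a v)) => apply (cmp_comp1 S a); [exact cmp_S | cmpt2]
  end.

Lemma cmp_Fv : cmp (fun v => Fv (nth 0 v 0) (nth 1 v 0)).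
Proof.
  unfold Fv, chkb, chkND, chkMEM, chkMS, chkTS, chkLS, chkFS, chkAX, chkTOP, cc, ok, fm, rl, cl, ch1, ch2, ch3, ch4.
  cbv beta zeta.
  cmpt2.
Qed.

Lemma cmp_valid : cmp (fun v => b2n (vb (nth 0 v 0))).
Proof.
  eapply cmp_ext; [|apply (cmp_cov Fv), cmp_Fv]. intro v. reflexivity.
Qed.

End Checker.

Lemma fm_node f r C a b x y : fm (node f r C a b x y) = f.
Proof. unfold fm, node. rewrite !p1_pr. reflexivity. Qed.
Lemma rl_node f r C a b x y : rl (node f r C a b x y) = r.
Proof. unfold rl, node. rewrite p1_pr, p2_pr. reflexivity. Qed.
Lemma cl_node f r C a b x y : cl (node f r C a b x y) = C.
Proof. unfold cl, node. rewrite p2_pr, p1_pr. reflexivity. Qed.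
Lemma ch1_node f r C a b x y : ch1 (node f r C a b x y) = a.
Proof. unfold ch1, node. rewrite !p2_pr, p1_pr. reflexivity. Qed.
Lemma ch2_node f r C a b x y : ch2 (node f r C a b x y) = b.
Proof. unfold ch2, node. rewrite !p2_pr, p1_pr. reflexivity. Qed.
Lemma ch3_node f r C a b x y : ch3 (node f r C a b x y) = x.
Proof. unfold ch3, node. rewrite !p2_pr, p1_pr. reflexivity. Qed.
Lemma ch4_node f r C a b x y : ch4 (node f r C a b x y) = y.
Proof. unfold ch4, node. rewrite !p2_pr. reflexivity. Qed.

Lemma ch_lt c : 1 <= fm c -> ch1 c < c /\ ch2 c < c /\ ch3 c < c /\ ch4 c < c.
Proof.
  intro H. unfold fm in H. pose proof (p1_le (p1 c)).
  pose proof (p2_lt c ltac:(lia)).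
  unfold ch1, ch2, ch3, ch4.
  pose proof (p1_le (p2 (p2 c))). pose proof (p2_le (p2 c)).
  pose proof (p1_le (p2 (p2 (p2 c)))). pose proof (p2_le (p2 (p2 c))).
  pose proof (p1_le (p2 (p2 (p2 (p2 c))))). pose proof (p2_le (p2 (p2 (p2 c)))).
  pose proof (p2_le (p2 (p2 (p2 (p2 c))))). lia.
Qed.

Section Sound.
Variable axb : nat -> bool.

Definition mean (f C : nat) : Prop :=
  match f with
  | 1 => nd (map dF (lstd (p1 C))) (dF (p2 C))
  | 2 => In (p1 C) (lstd (p2 C))
  | 3 => map dF (lstd (p2 C)) = map shift (map dF (lstd (p1 C)))
  | 4 => dT (p2 (p2 C)) = tsubst (semD (p1 C)) (dT (p1 (p2 C)))
  | 5 => map dT (lstd (p2 (p2 C))) = map (tsubst (semD (p1 C))) (map dT (lstd (p1 (p2 C))))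
  | 6 => dF (p2 (p2 C)) = fsubst (semD (p1 C)) (dF (p1 (p2 C)))
  | 7 => forall x, In x (lstd C) -> axb x = true
  | 8 => nd (map dF (lstd (p1 C))) (dF (p2 C)) /\ forall x, In x (lstd (p1 C)) -> axb x = true
  | _ => True
  end.

Lemma cc_tab c j f C : j < c ->
  cc c (tab (Fv axb) c) j f C = (fm j =? f) && vb axb j && (cl j =? C).
Proof.
  intro H. unfold cc, ok. rewrite lk_tab by auto. unfold cov, vb. unfold Fv at 1.
  destruct (chkb axb j (tab (Fv axb) j)); reflexivity.
Qed.

Definition IHt c := forall j, j < c -> vb axb j = true -> mean (fm j) (cl j).

Lemma use_cc c j f C : IHt c -> j < c -> cc c (tab (Fv axb) c) j f C = true -> mean f C /\ cl j = C.
Proof.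
  intros IH Hj H. rewrite cc_tab in H by auto.
  apply andb_true_iff in H as [H H3]. apply andb_true_iff in H as [H1 H2].
  apply Nat.eqb_eq in H1, H3. split; auto. rewrite <- H1, <- H3. apply IH; auto.
Qed.

Ltac bdes := repeat match goal with
 | H : (_ || _) = true |- _ => apply orb_true_iff in H; destruct H as [H|H]
 | H : (_ && _) = true |- _ => let H' := fresh "H" in apply andb_true_iff in H; destruct H as [H H']
 | H : (_ =? _) = true |- _ => apply Nat.eqb_eq in H
 | H : (_ <? _) = true |- _ => apply Nat.ltb_lt in H
 end.

Ltac ucc IH c :=
  let L := fresh "Hlt" in
  match goal with
  | H : cc c _ (ch1 c) _ _ = true |- _ => pose proof (ch_lt c ltac:(lia)) as L;
      apply (use_cc c (ch1 c) _ _ IH (proj1 L)) in H; destruct H as [? ?]; clear L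
  | H : cc c _ (ch2 c) _ _ = true |- _ => pose proof (ch_lt c ltac:(lia)) as L;
      apply (use_cc c (ch2 c) _ _ IH (proj1 (proj2 L))) in H; destruct H as [? ?]; clear L
  | H : cc c _ (ch3 c) _ _ = true |- _ => pose proof (ch_lt c ltac:(lia)) as L;
      apply (use_cc c (ch3 c) _ _ IH (proj1 (proj2 (proj2 L)))) in H; destruct H as [? ?]; clear L
  | H : cc c _ (ch4 c) _ _ = true |- _ => pose proof (ch_lt c ltac:(lia)) as L;
      apply (use_cc c (ch4 c) _ _ IH (proj2 (proj2 (proj2 L)))) in H; destruct H as [? ?]; clear L
  end.

Ltac ps := cbn [mean map] in *; repeat progress (rewrite ?p1_pr in *; rewrite ?p2_pr in *; rewrite ?lstd_S in *); cbn [mean map] in *.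

Lemma dF_imp_pr a b : dF (pr 3 (pr a b)) = imp (dF a) (dF b).
Proof. rewrite dF_imp; repeat rewrite ?p1_pr, ?p2_pr; auto. Qed.
Lemma dF_all_pr a : dF (pr 4 a) = all (dF a).
Proof. rewrite dF_all; repeat rewrite ?p1_pr, ?p2_pr; auto. Qed.
Lemma dF_eq_pr a b : dF (pr 2 (pr a b)) = eq (dT a) (dT b).
Proof. rewrite dF_eq; repeat rewrite ?p1_pr, ?p2_pr; auto. Qed.
Lemma dF_zero : dF 0 = fal.
Proof. apply dF_0. rewrite <- pr00. apply p1_pr. Qed.
Ltac dsimp := rewrite ?dF_imp_pr, ?dF_all_pr, ?dF_eq_pr, ?dF_zero in *.
Lemma semD_i0 x i : semD (pr 1 (pr 0 x)) i = scons (dT x) var i.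
Proof. unfold semD. rewrite ?p1_pr, ?p2_pr, ?p1_pr, ?p2_pr. cbn [Nat.eqb]. destruct i; reflexivity. Qed.
Lemma d_inst0 d : p1 d = 1 -> p1 (p2 d) = 0 -> d = pr 1 (pr 0 (p2 (p2 d))).
Proof. intros H1 H2. rewrite <- H1, <- H2, !pr_surj. reflexivity. Qed.

Lemma sound_ND c : IHt c -> fm c = 1 -> chkND c (tab (Fv axb) c) = true -> mean 1 (cl c).
Proof.
  intros IH Hf H. unfold chkND in H. cbv zeta in H. cbn [mean].
  set (G := p1 (cl c)) in *. set (p := p2 (cl c)) in *.
  bdes; repeat ucc IH c; ps.
  - apply ndAx. apply in_map. assumption.
  - rewrite dF_imp by assumption. apply ndII. assumption.
  - dsimp. eapply ndIE; eassumption.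
  - rewrite dF_all by assumption. apply ndAllI.
    match goal with H : map dF _ = map shift _ |- _ => rewrite <- H end. assumption.
  - dsimp. match goal with H : dF p = _ |- _ => rewrite H end.
    match goal with H1 : p1 (p1 ?d) = 1, H2 : p1 (p2 (p1 ?d)) = 0 |- _ =>
      rewrite (d_inst0 _ H1 H2) end.
    rewrite (fsubst_ext _ _ _ (semD_i0 _)). apply ndAllE. assumption.
  - apply ndExp. dsimp. assumption.
  - apply ndDN. dsimp. assumption.
  - rewrite dF_eq by assumption. match goal with H : p1 (p2 p) = _ |- _ => rewrite H end. apply ndRefl.
  - dsimp. match goal with H : dF p = _ |- _ => rewrite H end.
    match goal with H : dF ?q = _, H' : nd _ (dF ?q) |- _ => rewrite H in H' end.
    rewrite (fsubst_ext _ _ _ (semD_i0 _)).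
    match goal with H' : nd _ (fsubst _ _) |- _ => rewrite (fsubst_ext _ _ _ (semD_i0 _)) in H' end.
    eapply ndLeib; eassumption.
Qed.


Lemma lstd_pos L : 0 < L -> lstd L = p1 (pred L) :: lstd (p2 (pred L)).
Proof. intro H. destruct L. lia. apply lstd_S. Qed.
Lemma dT_var_pr j : dT (pr 0 j) = var j.
Proof. rewrite dT_var; rewrite ?p1_pr, ?p2_pr; auto. Qed.
Lemma semD_shift_ext t : tsubst (semD (pr 0 0)) t = tsubst (fun k => var (S k)) t.
Proof. apply tsubst_ext. apply semD_shift. Qed.

Lemma sound_MEM c : IHt c -> fm c = 2 -> chkMEM c (tab (Fv axb) c) = true -> mean 2 (cl c).
Proof.
  intros IH Hf H. unfold chkMEM in H. cbv zeta in H. cbn [mean].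
  set (x := p1 (cl c)) in *. set (L := p2 (cl c)) in *.
  bdes; repeat ucc IH c; ps.
  - rewrite lstd_pos by auto. left. auto.
  - rewrite lstd_pos by auto. right. auto.
Qed.

Lemma sound_MS c : IHt c -> fm c = 3 -> chkMS c (tab (Fv axb) c) = true -> mean 3 (cl c).
Proof.
  intros IH Hf H. unfold chkMS in H. cbv zeta in H. cbn [mean].
  set (L := p1 (cl c)) in *. set (L' := p2 (cl c)) in *.
  bdes; repeat ucc IH c; ps.
  - match goal with H1 : L = 0, H2 : L' = 0 |- _ => rewrite H1, H2 end. reflexivity.
  - rewrite (lstd_pos L), (lstd_pos L') by auto. cbn [map].
    match goal with H : dF _ = fsubst _ _ |- _ => rewrite H end.
    match goal with H : map dF (lstd (p2 (pred L'))) = _ |- _ => rewrite H end.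
    f_equal. all: try (apply fsubst_ext; apply semD_shift).
Qed.

Lemma sound_TS c : IHt c -> fm c = 4 -> chkTS c (tab (Fv axb) c) = true -> mean 4 (cl c).
Proof.
  intros IH Hf H. unfold chkTS in H. cbv zeta in H. cbn [mean].
  set (d := p1 (cl c)) in *. set (a := p1 (p2 (cl c))) in *. set (b := p2 (p2 (cl c))) in *.
  bdes; repeat ucc IH c; ps.
  - rewrite (dT_var a) by auto. cbn [tsubst]. unfold semD.
    match goal with H : p1 d = 0 |- _ => rewrite H end. cbn [Nat.eqb].
    match goal with H : b = _ |- _ => rewrite H end.
    destruct (p2 a <? p2 d); apply dT_var_pr.
  - rewrite (dT_var a) by auto. cbn [tsubst]. unfold semD.
    match goal with H : p1 d = 1 |- _ => rewrite H end. cbn [Nat.eqb].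
    match goal with H : (if _ then _ else _) = true |- _ => revert H end.
    destruct (p2 a <? p1 (p2 d)). intro E; apply Nat.eqb_eq in E; rewrite E; apply dT_var_pr.
    destruct (p2 a =? p1 (p2 d)). intro E; apply Nat.eqb_eq in E; rewrite E; reflexivity.
    intro E; apply Nat.eqb_eq in E; rewrite E; apply dT_var_pr.
  - rewrite (dT_func a), (dT_func b) by auto. cbn [tsubst]. f_equal.
    + congruence.
    + assumption.
Qed.

Lemma sound_LS c : IHt c -> fm c = 5 -> chkLS c (tab (Fv axb) c) = true -> mean 5 (cl c).
Proof.
  intros IH Hf H. unfold chkLS in H. cbv zeta in H. cbn [mean].
  set (d := p1 (cl c)) in *. set (a := p1 (p2 (cl c))) in *. set (b := p2 (p2 (cl c))) in *.
  bdes; repeat ucc IH c; ps.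
  - match goal with H1 : a = 0, H2 : b = 0 |- _ => rewrite H1, H2 end. reflexivity.
  - rewrite (lstd_pos a), (lstd_pos b) by auto. cbn [map]. f_equal; auto.
Qed.

Lemma semD_lift_up' d i : p1 d = 0 -> up (semD d) i = semD (pr 0 (S (p2 d))) i.
Proof.
  intro H. assert (E : d = pr 0 (p2 d)) by (rewrite <- H; symmetry; apply pr_surj).
  rewrite E at 1. apply semD_lift_up.
Qed.
Lemma semD_inst_up' d u' i : p1 d = 1 -> dT u' = tsubst (fun k => var (S k)) (dT (p2 (p2 d))) ->
  up (semD d) i = semD (pr 1 (pr (S (p1 (p2 d))) u')) i.
Proof.
  intros H Hu. assert (E : d = pr 1 (pr (p1 (p2 d)) (p2 (p2 d)))) by (rewrite <- H, !pr_surj; reflexivity).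
  rewrite E at 1. apply semD_inst_up. auto.
Qed.

Lemma sound_FS c : IHt c -> fm c = 6 -> chkFS c (tab (Fv axb) c) = true -> mean 6 (cl c).
Proof.
  intros IH Hf H. unfold chkFS in H. cbv zeta in H. cbn [mean].
  set (d := p1 (cl c)) in *. set (a := p1 (p2 (cl c))) in *. set (b := p2 (p2 (cl c))) in *.
  bdes; repeat ucc IH c; ps.
  - match goal with H1 : a = 0, H2 : b = 0 |- _ => rewrite H1, H2 end. rewrite dF_zero. reflexivity.
  - rewrite (dF_rel a), (dF_rel b) by auto. cbn [fsubst]. f_equal. congruence.
    assumption.
  - rewrite (dF_eq a), (dF_eq b) by auto. cbn [fsubst]. f_equal; auto.
  - rewrite (dF_imp a), (dF_imp b) by auto. cbn [fsubst]. f_equal; auto.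
  - rewrite (dF_all a), (dF_all b) by auto. cbn [fsubst]. f_equal.
    match goal with H : dF (p2 b) = _ |- _ => rewrite H end. apply fsubst_ext. intro i.
    symmetry. apply semD_lift_up'. auto.
  - rewrite (dF_all a), (dF_all b) by auto. cbn [fsubst]. f_equal.
    match goal with H : dF (p2 b) = _ |- _ => rewrite H end. apply fsubst_ext. intro i.
    symmetry. apply semD_inst_up'. auto.
    match goal with H : dT _ = tsubst _ _ |- _ => rewrite H end. apply semD_shift_ext.
Qed.

Lemma sound_AX c : IHt c -> fm c = 7 -> chkAX axb c (tab (Fv axb) c) = true -> mean 7 (cl c).
Proof.
  intros IH Hf H. unfold chkAX in H. cbn [mean].
  bdes; repeat ucc IH c; ps.
  - match goal with H1 : cl c = 0 |- _ => rewrite H1 end. rewrite lstd_0. intros x [].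
  - rewrite lstd_pos by auto. intros x [<-|Hx]; auto.
Qed.

Lemma sound_TOP c : IHt c -> fm c = 8 -> chkTOP c (tab (Fv axb) c) = true -> mean 8 (cl c).
Proof.
  intros IH Hf H. unfold chkTOP in H. cbn [mean].
  bdes; repeat ucc IH c; ps. split; auto.
Qed.

Theorem soundness c : vb axb c = true -> mean (fm c) (cl c).
Proof.
  induction c as [c IHc] using (well_founded_induction lt_wf). intro H.
  assert (IH : IHt c) by (intros j Hj; apply IHc; auto).
  unfold vb, chkb in H.
  bdes; match goal with E : fm c = _ |- _ => rewrite E end.
  - apply sound_ND; auto.
  - apply sound_MEM; auto.
  - apply sound_MS; auto.
  - apply sound_TS; auto.
  - apply sound_LS; auto.
  - apply sound_FS; auto.
  - apply sound_AX; auto.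
  - apply sound_TOP; auto.
Qed.

End Sound.

Arguments fm : simpl never.
Arguments rl : simpl never.
Arguments cl : simpl never.
Arguments ch1 : simpl never.
Arguments ch2 : simpl never.
Arguments ch3 : simpl never.
Arguments ch4 : simpl never.
Arguments vb : simpl never.
Arguments node : simpl never.

Lemma node_ge f r C a b x y : 1 <= f -> a < node f r C a b x y /\ b < node f r C a b x y /\ x < node f r C a b x y /\ y < node f r C a b x y.
Proof.
  intro H. pose proof (ch_lt (node f r C a b x y)).
  rewrite fm_node, ch1_node, ch2_node, ch3_node, ch4_node in H0. auto.
Qed.

Section Compl.
Variable axb : nat -> bool.

Definition Cert f C := exists j, vb axb j = true /\ fm j = f /\ cl j = C.

Lemma ltb0S x : (0 <? S x) = true.
Proof. reflexivity. Qed.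
Lemma tcode_semD_lift m i : tcode (semD (pr 0 m) i) = pr 0 (if i <? m then i else S i).
Proof. unfold semD. rewrite ?p1_pr, ?p2_pr. cbn [Nat.eqb]. destruct (i <? m); reflexivity. Qed.
Lemma tcode_semD_inst m u i : tcode (semD (pr 1 (pr m (tcode u))) i) =
  if i <? m then pr 0 i else if i =? m then tcode u else pr 0 (pred i).
Proof.
  unfold semD. repeat rewrite ?p1_pr, ?p2_pr. cbn [Nat.eqb].
  destruct (i <? m). reflexivity. destruct (i =? m). rewrite dT_tcode; reflexivity. reflexivity.
Qed.

Lemma lc_cons x l : lc (x :: l) = S (pr x (lc l)).
Proof. reflexivity. Qed.
Lemma lc_nil : lc [] = 0.
Proof. reflexivity. Qed.

Ltac nd_lt := match goal with
  | |- ?a < node ?f ?r ?C ?a ?b ?x ?y => apply (node_ge f r C a b x y); lia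
  | |- ?b < node ?f ?r ?C ?a ?b ?x ?y => apply (node_ge f r C a b x y); lia
  | |- ?x < node ?f ?r ?C ?a ?b ?x ?y => apply (node_ge f r C a b x y); lia
  | |- ?y < node ?f ?r ?C ?a ?b ?x ?y => apply (node_ge f r C a b x y); lia
  end.

Ltac vnode :=
  unfold vb at 1;
  unfold chkb, chkND, chkMEM, chkMS, chkTS, chkLS, chkFS, chkAX, chkTOP; cbv zeta;
  rewrite ?fm_node, ?rl_node, ?cl_node, ?ch1_node, ?ch2_node, ?ch3_node, ?ch4_node;
  rewrite !cc_tab by nd_lt;
  repeat progress (
    repeat match goal with
    | H : vb axb ?j = true |- context [vb axb ?j] => rewrite H
    | H : fm ?j = _ |- context [fm ?j] => rewrite H
    | H : cl ?j = _ |- context [cl ?j] => rewrite H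
    | H : axb ?j = true |- context [axb ?j] => rewrite H
    end;
    rewrite ?p1_pr, ?p2_pr, ?lc_cons, ?Nat.eqb_refl, ?pr00, ?ltb0S;
    cbn [andb orb Nat.eqb negb Nat.pred]);
  try reflexivity.

Ltac mk f r C a b x y := exists (node f r C a b x y); rewrite fm_node, cl_node; split; [|split; reflexivity].

Lemma cert_mem x l : In x l -> Cert 2 (pr x (lc l)).
Proof.
  induction l as [|a l IH]; intro H. destruct H.
  destruct (Nat.eq_dec a x) as [->|Hne].
  - mk 2 0 (pr x (lc (x :: l))) 0 0 0 0. vnode.
  - destruct H as [H|H]. congruence. destruct (IH H) as [j [H1 [H2 H3]]].
    mk 2 1 (pr x (lc (a :: l))) j 0 0 0. vnode.
Qed.

Lemma cert_ax l : (forall x, In x l -> axb x = true) -> Cert 7 (lc l).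
Proof.
  induction l as [|a l IH]; intro H.
  - mk 7 0 (lc []) 0 0 0 0. vnode.
  - destruct IH as [j [H1 [H2 H3]]]. intros; apply H; right; auto.
    assert (Ha : axb a = true) by (apply H; left; auto).
    mk 7 1 (lc (a :: l)) j 0 0 0. vnode.
Qed.

Definition Dv d := (exists m, d = pr 0 m) \/ (exists m u, d = pr 1 (pr m (tcode u))).

Lemma cert_tsub t : forall d, Dv d -> Cert 4 (pr d (pr (tcode t) (tcode (tsubst (semD d) t)))).
Proof.
  induction t as [i|f ts IHts] using term_ind'; intros d Hd.
  - cbn [tsubst]. rewrite tcode_var.
    destruct Hd as [[m ->]|[m [u ->]]].
    + rewrite tcode_semD_lift.
      mk 4 0 (pr (pr 0 m) (pr (pr 0 i) (pr 0 (if i <? m then i else S i)))) 0 0 0 0. vnode.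
    + rewrite tcode_semD_inst.
      mk 4 0 (pr (pr 1 (pr m (tcode u))) (pr (pr 0 i) (if i <? m then pr 0 i else if i =? m then tcode u else pr 0 (pred i)))) 0 0 0 0.
      vnode. destruct (i <? m); [|destruct (i =? m)]; rewrite Nat.eqb_refl; reflexivity.
  - assert (HL : Cert 5 (pr d (pr (lc (map tcode ts)) (lc (map tcode (map (tsubst (semD d)) ts)))))).
    { induction IHts as [|u ts Hu Hts IH].
      - mk 5 0 (pr d (pr (lc []) (lc []))) 0 0 0 0. vnode.
      - destruct IH as [j2 [A1 [A2 A3]]]. destruct (Hu d Hd) as [j1 [B1 [B2 B3]]].
        cbn [map]. mk 5 1 (pr d (pr (lc (tcode u :: map tcode ts)) (lc (tcode (tsubst (semD d) u) :: map tcode (map (tsubst (semD d)) ts))))) j1 j2 0 0.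
        vnode. }
    destruct HL as [j [A1 [A2 A3]]]. cbn [tsubst]. rewrite !tcode_func.
    mk 4 1 (pr d (pr (pr 1 (pr f (lc (map tcode ts)))) (pr 1 (pr f (lc (map tcode (map (tsubst (semD d)) ts))))))) j 0 0 0.
    vnode.
Qed.

Lemma cert_fsub p : forall d, Dv d -> Cert 6 (pr d (pr (fcode p) (fcode (fsubst (semD d) p)))).
Proof.
  induction p as [|r ts|s t|p1' IH1 p2' IH2|A IH]; intros d Hd; cbn [fsubst].
  - mk 6 0 (pr d (pr (fcode fal) (fcode fal))) 0 0 0 0. vnode.
  - rewrite !fcode_rel.
    assert (HL : Cert 5 (pr d (pr (lc (map tcode ts)) (lc (map tcode (map (tsubst (semD d)) ts)))))).
    { induction ts as [|u ts IH].
      - mk 5 0 (pr d (pr (lc []) (lc []))) 0 0 0 0. vnode.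
      - destruct IH as [j2 [A1 [A2 A3]]]. destruct (cert_tsub u d Hd) as [j1 [B1 [B2 B3]]].
        cbn [map]. mk 5 1 (pr d (pr (lc (tcode u :: map tcode ts)) (lc (tcode (tsubst (semD d) u) :: map tcode (map (tsubst (semD d)) ts))))) j1 j2 0 0.
        vnode. }
    destruct HL as [j [A1 [A2 A3]]].
    mk 6 1 (pr d (pr (pr 1 (pr r (lc (map tcode ts)))) (pr 1 (pr r (lc (map tcode (map (tsubst (semD d)) ts))))))) j 0 0 0.
    vnode.
  - destruct (cert_tsub s d Hd) as [j1 [A1 [A2 A3]]]. destruct (cert_tsub t d Hd) as [j2 [B1 [B2 B3]]].
    cbn [fcode].
    mk 6 2 (pr d (pr (pr 2 (pr (tcode s) (tcode t))) (pr 2 (pr (tcode (tsubst (semD d) s)) (tcode (tsubst (semD d) t)))))) j1 j2 0 0.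
    vnode.
  - destruct (IH1 d Hd) as [j1 [A1 [A2 A3]]]. destruct (IH2 d Hd) as [j2 [B1 [B2 B3]]].
    cbn [fcode].
    mk 6 3 (pr d (pr (pr 3 (pr (fcode p1') (fcode p2'))) (pr 3 (pr (fcode (fsubst (semD d) p1')) (fcode (fsubst (semD d) p2')))))) j1 j2 0 0.
    vnode.
  - cbn [fcode]. destruct Hd as [[m ->]|[m [u ->]]].
    + destruct (IH (pr 0 (S m))) as [j [A1 [A2 A3]]]. left; eauto.
      rewrite (fsubst_ext A (up (semD (pr 0 m))) (semD (pr 0 (S m)))) by apply semD_lift_up.
      mk 6 4 (pr (pr 0 m) (pr (pr 4 (fcode A)) (pr 4 (fcode (fsubst (semD (pr 0 (S m))) A))))) j 0 0 0.
      vnode.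
    + set (u' := tsubst (fun k => var (S k)) u).
      destruct (cert_tsub u (pr 0 0)) as [j2 [B1 [B2 B3]]]. left; eauto.
      rewrite semD_shift_ext in B3. fold u' in B3.
      destruct (IH (pr 1 (pr (S m) (tcode u')))) as [j [A1 [A2 A3]]]. right; eauto.
      rewrite (fsubst_ext A (up (semD (pr 1 (pr m (tcode u))))) (semD (pr 1 (pr (S m) (tcode u'))))).
      2: { intro i. apply semD_inst_up. rewrite !dT_tcode. reflexivity. }
      mk 6 4 (pr (pr 1 (pr m (tcode u))) (pr (pr 4 (fcode A)) (pr 4 (fcode (fsubst (semD (pr 1 (pr (S m) (tcode u')))) A))))) j j2 0 0.
      vnode.
Qed.

Lemma cert_ms G : Cert 3 (pr (lc (map fcode G)) (lc (map fcode (map shift G)))).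
Proof.
  induction G as [|p G IH].
  - mk 3 0 (pr (lc []) (lc [])) 0 0 0 0. vnode.
  - destruct IH as [j2 [A1 [A2 A3]]]. destruct (cert_fsub p (pr 0 0)) as [j1 [B1 [B2 B3]]]. left; eauto.
    rewrite (fsubst_ext p _ (fun k => var (S k))) in B3 by apply semD_shift. fold (shift p) in B3.
    cbn [map]. mk 3 1 (pr (lc (fcode p :: map fcode G)) (lc (fcode (shift p) :: map fcode (map shift G)))) j1 j2 0 0.
    vnode.
Qed.

Lemma cert_nd G p : nd G p -> Cert 1 (pr (lc (map fcode G)) (fcode p)).
Proof.
  induction 1 as [G p H|G p q H IH|G p q H1 IH1 H2 IH2|G p H IH|G p t H IH|G p H IH|G p H IH|G t|G s t p H1 IH1 H2 IH2].
  - destruct (cert_mem (fcode p) (map fcode G)) as [j [A1 [A2 A3]]]. apply in_map; auto.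
    mk 1 0 (pr (lc (map fcode G)) (fcode p)) j 0 0 0. vnode.
  - destruct IH as [j [A1 [A2 A3]]]. cbn [map] in A3.
    cbn [fcode]. mk 1 1 (pr (lc (map fcode G)) (pr 3 (pr (fcode p) (fcode q)))) j 0 0 0. vnode.
  - destruct IH1 as [j1 [A1 [A2 A3]]]. destruct IH2 as [j2 [B1 [B2 B3]]]. cbn [fcode] in A3.
    mk 1 2 (pr (lc (map fcode G)) (fcode q)) j1 j2 0 0. vnode.
  - destruct IH as [j1 [A1 [A2 A3]]]. destruct (cert_ms G) as [j2 [B1 [B2 B3]]].
    cbn [fcode]. mk 1 3 (pr (lc (map fcode G)) (pr 4 (fcode p))) j1 j2 0 0. vnode.
  - destruct IH as [j1 [A1 [A2 A3]]]. cbn [fcode] in A3.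
    destruct (cert_fsub p (pr 1 (pr 0 (tcode t)))) as [j2 [B1 [B2 B3]]]. right; eauto.
    rewrite (fsubst_ext p _ (scons t var)) in B3 by apply semD_inst0. fold (inst t p) in B3.
    mk 1 4 (pr (lc (map fcode G)) (fcode (inst t p))) j1 j2 0 0. vnode.
  - destruct IH as [j [A1 [A2 A3]]]. cbn [fcode] in A3.
    mk 1 5 (pr (lc (map fcode G)) (fcode p)) j 0 0 0. vnode.
  - destruct IH as [j [A1 [A2 A3]]]. cbn [fcode neg] in A3.
    mk 1 6 (pr (lc (map fcode G)) (fcode p)) j 0 0 0. vnode.
  - cbn [fcode]. mk 1 7 (pr (lc (map fcode G)) (pr 2 (pr (tcode t) (tcode t)))) 0 0 0 0. vnode.
  - destruct IH1 as [j1 [A1 [A2 A3]]]. destruct IH2 as [j2 [B1 [B2 B3]]]. cbn [fcode] in A3.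
    destruct (cert_fsub p (pr 1 (pr 0 (tcode s)))) as [j3 [C1 [C2 C3]]]. right; eauto.
    rewrite (fsubst_ext p _ (scons s var)) in C3 by apply semD_inst0. fold (inst s p) in C3.
    destruct (cert_fsub p (pr 1 (pr 0 (tcode t)))) as [j4 [D1 [D2 D3]]]. right; eauto.
    rewrite (fsubst_ext p _ (scons t var)) in D3 by apply semD_inst0. fold (inst t p) in D3.
    mk 1 8 (pr (lc (map fcode G)) (fcode (inst t p))) j1 j2 j3 j4. vnode.
Qed.

Lemma cert_top G p : nd G p -> (forall x, In x (map fcode G) -> axb x = true) ->
  Cert 8 (pr (lc (map fcode G)) (fcode p)).
Proof.
  intros H1 H2. destruct (cert_nd G p H1) as [j1 [A1 [A2 A3]]]. destruct (cert_ax _ H2) as [j2 [B1 [B2 B3]]].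
  mk 8 0 (pr (lc (map fcode G)) (fcode p)) j1 j2 0 0. vnode.
Qed.

End Compl.

Lemma nd_weak G p : nd G p -> forall G', incl G G' -> nd G' p.
Proof.
  induction 1; intros G' Hi.
  - apply ndAx. auto.
  - apply ndII. apply IHnd. intros x [->|Hx]; [left|right]; auto.
  - eapply ndIE; eauto.
  - apply ndAllI. apply IHnd. apply incl_map. auto.
  - apply ndAllE. auto.
  - apply ndExp. auto.
  - apply ndDN. auto.
  - apply ndRefl.
  - eapply ndLeib; eauto.
Qed.

Lemma provable_mp T p q : provable T (imp p q) -> provable T p -> provable T q.
Proof.
  intros [G1 [H1 D1]] [G2 [H2 D2]]. exists (G1 ++ G2). split.
  - intros x Hx. apply in_app_or in Hx as [Hx|Hx]; auto.
  - eapply ndIE; eapply nd_weak; eauto; intros x Hx; apply in_or_app; auto.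
Qed.

Lemma tlang_func lf f ts : tlang lf (func f ts) <-> lf f (length ts) /\ Forall (tlang lf) ts.
Proof.
  cbn [tlang]. apply and_iff_compat_l. induction ts as [|u ts IH]; cbn.
  split; auto. rewrite Forall_cons_iff, <- IH. reflexivity.
Qed.
Lemma tbound_func b f ts : tbound b (func f ts) <-> Forall (tbound b) ts.
Proof.
  cbn [tbound]. induction ts as [|u ts IH]; cbn.
  split; auto. rewrite Forall_cons_iff, <- IH. reflexivity.
Qed.

Lemma tlang_subst lf t s : tlang lf t -> (forall i, tlang lf (s i)) -> tlang lf (tsubst s t).
Proof.
  intros Ht Hs. induction t as [i|f ts IH] using term_ind'. apply Hs.
  simpl tsubst. apply tlang_func in Ht as [H1 H2]. apply tlang_func. rewrite length_map. split; auto.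
  clear H1. induction IH; inversion H2; subst; constructor; auto.
Qed.
Lemma flang_subst lf lr p : forall s, flang lf lr p -> (forall i, tlang lf (s i)) -> flang lf lr (fsubst s p).
Proof.
  induction p; intros s Hp Hs; simpl in *; auto.
  - destruct Hp as [H1 H2]. rewrite length_map. split; auto. apply Forall_map.
    eapply Forall_impl; [|exact H2]. intros; apply tlang_subst; auto.
  - destruct Hp; split; apply tlang_subst; auto.
  - destruct Hp; split; auto.
  - apply IHp; auto. intros [|i]; simpl; auto. apply tlang_subst; auto. intro; simpl; auto.
Qed.

Lemma tbound_subst b b' t s : tbound b t -> (forall i, i < b -> tbound b' (s i)) -> tbound b' (tsubst s t).
Proof.
  intros Ht Hs. induction t as [i|f ts IH] using term_ind'. apply Hs. exact Ht.
  simpl tsubst. apply tbound_func in Ht. apply tbound_func.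
  induction IH; inversion Ht; subst; constructor; auto.
Qed.
Lemma fbound_subst p : forall b b' s, fbound b p -> (forall i, i < b -> tbound b' (s i)) -> fbound b' (fsubst s p).
Proof.
  induction p; intros b b' s Hp Hs; simpl in *; auto.
  - apply Forall_map. eapply Forall_impl; [|exact Hp]. intros; eapply tbound_subst; eauto.
  - destruct Hp; split; eapply tbound_subst; eauto.
  - destruct Hp; split; eauto.
  - eapply IHp; eauto. intros [|i] Hi; simpl. lia.
    eapply tbound_subst. apply Hs. lia. intros j Hj. simpl. lia.
Qed.
Lemma tbound_mono t b b' : tbound b t -> b <= b' -> tbound b' t.
Proof.
  intros Ht Hb. induction t as [i|f ts IH] using term_ind'. simpl in *; lia.
  apply tbound_func in Ht. apply tbound_func. induction IH; inversion Ht; subst; constructor; auto.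
Qed.
Lemma fbound_mono p : forall b b', fbound b p -> b <= b' -> fbound b' p.
Proof.
  induction p; intros b b' H Hb; simpl in *; auto.
  - eapply Forall_impl; [|exact H]. intros; eapply tbound_mono; eauto.
  - destruct H; split; eapply tbound_mono; eauto.
  - destruct H; split; eauto.
  - eapply IHp; eauto. lia.
Qed.

Definition cneg a := pr 3 (pr a (pr 0 0)).
Definition cand a b := cneg (pr 3 (pr a (cneg b))).
Definition cex a := cneg (pr 4 (cneg a)).
Definition ctru := cneg (pr 0 0).

Lemma fcode_neg p : fcode (neg p) = cneg (fcode p). Proof. reflexivity. Qed.
Lemma fcode_and p q : fcode (and p q) = cand (fcode p) (fcode q). Proof. reflexivity. Qed.
Lemma fcode_ex p : fcode (ex p) = cex (fcode p). Proof. reflexivity. Qed.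
Lemma fcode_tru : fcode tru = ctru. Proof. reflexivity. Qed.

Definition Tn (z s n : nat) : nat := Rec (fun _ => z) (fun _ r _ => cex (cand (cand r ctru) s)) n 0.
Definition En (z s rr n : nat) : nat := cex (cand (cand (Tn z s n) ctru) rr).

Lemma cmp_En z s rr : cmp (fun v => En z s rr (nth 0 v 0)).
Proof.
  unfold En. assert (H : cmp (fun v => Tn z s (nth 0 v 0))).
  { unfold Tn. apply (cmp_comp2 (Rec (fun _ => z) (fun _ r _ => cex (cand (cand r ctru) s)))).
    apply cmp_rec. cmpt. unfold cex, cand, cneg, ctru. cmpt. cmpt. cmpt. }
  unfold cex, cand, cneg, ctru. cmpt.
Qed.

Section Trans.
Variable I : interp.

Lemma ttr_num_0 off : ttr I (numeral 0) off 0 = and tru (fsubst (scons (var 0) var) (i_fun I 0 0)).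
Proof. reflexivity. Qed.
Lemma ttr_num_S n off : ttr I (numeral (S n)) off 0 =
  ex (and (and (ttr I (numeral n) (off + 1) 0) tru) (fsubst (scons (var 1) var) (i_fun I 1 1))).
Proof. reflexivity. Qed.
Lemma ttr_num_off n off : ttr I (numeral n) off 0 = ttr I (numeral n) 0 0.
Proof.
  revert off. induction n; intro off. reflexivity.
  rewrite !ttr_num_S. rewrite (IHn (off + 1)), (IHn (0 + 1)). reflexivity.
Qed.
Lemma translate_P n : translate I (rel 0 [numeral n]) = ex (and (and (ttr I (numeral n) 1 0) tru) (i_rel I 0 1)).
Proof. reflexivity. Qed.

Lemma code_phi n : fcode (translate I (rel 0 [numeral n])) =
  En (fcode (and tru (fsubst (scons (var 0) var) (i_fun I 0 0))))
     (fcode (fsubst (scons (var 1) var) (i_fun I 1 1))) (fcode (i_rel I 0 1)) n.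
Proof.
  rewrite translate_P, ttr_num_off. unfold En. rewrite fcode_ex, !fcode_and, fcode_tru. do 3 f_equal.
  induction n. reflexivity.
  rewrite ttr_num_S, ttr_num_off, fcode_ex, !fcode_and, fcode_tru, IHn. reflexivity.
Qed.

Lemma sent_phi lf lr n :
  flang lf lr (i_fun I 0 0) -> fbound 1 (i_fun I 0 0) ->
  flang lf lr (i_fun I 1 1) -> fbound 2 (i_fun I 1 1) ->
  flang lf lr (i_rel I 0 1) -> fbound 1 (i_rel I 0 1) ->
  flang lf lr (translate I (rel 0 [numeral n])) /\ fbound 0 (translate I (rel 0 [numeral n])).
Proof.
  intros L0 B0 L1 B1 LR BR.
  assert (HT : forall off, flang lf lr (ttr I (numeral n) off 0) /\ fbound 1 (ttr I (numeral n) off 0)).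
  { induction n; intro off.
    - rewrite ttr_num_0. cbn [flang fbound and neg tru]. split; (split; [|auto]); (split; [auto|]); split; auto.
      apply flang_subst; auto. intros [|i]; simpl; auto.
      eapply fbound_subst; eauto. intros [|i] Hi; simpl; lia.
    - rewrite ttr_num_S. destruct (IHn (off + 1)) as [H1 H2].
      cbn [flang fbound and neg tru ex]. repeat split; auto.
      apply flang_subst; auto. intros [|[|i]]; simpl; auto.
      eapply fbound_mono; eauto.
      eapply fbound_subst; eauto. intros [|[|i]] Hi; simpl; lia. }
  destruct (HT 1) as [H1 H2].
  rewrite translate_P. cbn [flang fbound and neg tru ex]. repeat split; auto.
Qed.

End Trans.

Lemma least_ex (f : nat -> bool) k : f k = true -> exists m, f m = true /\ forall i, i < m -> f i = false.
Proof.
  induction k as [k IH] using (well_founded_induction lt_wf). intro Hk.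
  destruct (classic (exists i, i < k /\ f i = true)) as [[i [Hi Hfi]]|Hn].
  - apply (IH i Hi Hfi).
  - exists k. split; auto. intros i Hi. destruct (f i) eqn:E; auto. exfalso; apply Hn; eauto.
Qed.

Lemma cneg_neq e : cneg e <> e.
Proof.
  unfold cneg. pose proof (pr_gt_r 3 (pr e (pr 0 0)) ltac:(lia)). pose proof (pr_ge_l e (pr 0 0)). lia.
Qed.

Theorem mainTheorem3 (A B : nat -> Prop) :
  rec_inseparable A B -> G1 (U_AB A B).
Proof.
  intros [reA [reB [disj Hno]]] S Hwf [a Ha] Hcons [I HI] Hcomp.
  destruct HI as [_ [_ [Hfun [Hrel [_ [_ Hax]]]]]].
  set (P := fun n => exists p, th_ax S p /\ fcode p = n) in *.
  set (axf := fun n => if excluded_middle_informative (P n) then 1 else 0).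
  set (axb := fun n => axf n =? 1).
  assert (Haxc : cmp (fun v => b2n (axb (nth 0 v 0)))).
  { exists (rC a [rP 0]). intro v. econstructor. constructor. constructor. constructor.
    unfold axb, axf.
    destruct (excluded_middle_informative (P (nth 0 v 0))) as [Hp|Hp].
    - apply (proj1 (Ha _)). exact Hp.
    - apply (proj2 (Ha _)). exact Hp. }
  assert (HaxP : forall x, axb x = true -> P x).
  { intros x. unfold axb, axf. destruct (excluded_middle_informative (P x)); auto; discriminate. }
  assert (HPax : forall x, P x -> axb x = true).
  { intros x Hx. unfold axb, axf. destruct (excluded_middle_informative (P x)); auto; contradiction. }
  destruct (Hfun 0 0 (or_introl (conj eq_refl eq_refl))) as [L0 B0].
  destruct (Hfun 1 1 (or_intror (conj eq_refl eq_refl))) as [L1 B1].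
  destruct (Hrel 0 1 (conj eq_refl eq_refl)) as [LR BR].
  set (z := fcode (and tru (fsubst (scons (var 0) var) (i_fun I 0 0)))).
  set (s := fcode (fsubst (scons (var 1) var) (i_fun I 1 1))).
  set (rr := fcode (i_rel I 0 1)).
  set (phi := fun n => translate I (rel 0 [numeral n])).
  assert (Hcode : forall n, fcode (phi n) = En z s rr n) by (intro n; apply code_phi).
  assert (Hincons : forall q, provable S q -> provable S (neg q) -> False).
  { intros q H1 H2. apply Hcons. eapply provable_mp; eauto. }
  set (topb := fun n c => vb axb c && (fm c =? 8) &&
                ((p2 (cl c) =? En z s rr n) || (p2 (cl c) =? cneg (En z s rr n)))).
  pose proof (cmp_valid axb Haxc) as Hvalid.
  pose proof (cmp_En z s rr) as HE.
  assert (Hfc : cmp (fun v => if topb (nth 1 v 0) (nth 0 v 0) then 0 else 1)).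
  { unfold topb, fm, cl, cneg. cmpt. }
  assert (Hgc : cmp (fun v => b2n (p2 (cl (nth 0 v 0)) =? En z s rr (nth 1 v 0)))).
  { unfold cl. cmpt. }
  destruct Hfc as [f Hf]. destruct Hgc as [g Hg].
  assert (T1 : forall n c, topb n c = true ->
     (provable S (phi n) /\ p2 (cl c) = En z s rr n) \/
     (provable S (neg (phi n)) /\ p2 (cl c) = cneg (En z s rr n))).
  { intros n c H. unfold topb in H. apply andb_true_iff in H as [H H3]. apply andb_true_iff in H as [H1 H2].
    apply Nat.eqb_eq in H2. pose proof (soundness axb c H1) as Hm. rewrite H2 in Hm. cbn [mean] in Hm.
    destruct Hm as [Hnd Hal].
    assert (Hp : provable S (dF (p2 (cl c)))).
    { exists (map dF (lstd (p1 (cl c)))). split; auto.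
      intros q Hq. apply in_map_iff in Hq as [x [<- Hx]].
      destruct (HaxP x (Hal x Hx)) as [q [Hq1 <-]]. rewrite dF_fcode. auto. }
    apply orb_true_iff in H3 as [H3|H3]; apply Nat.eqb_eq in H3.
    - left. split; auto. rewrite H3, <- Hcode, dF_fcode in Hp. auto.
    - right. split; auto. rewrite H3, <- Hcode, <- fcode_neg, dF_fcode in Hp. auto. }
  assert (T2 : forall n, exists c, topb n c = true).
  { intro n.
    destruct (sent_phi I (th_fun S) (th_rel S) n L0 B0 L1 B1 LR BR) as [Hs1 Hs2].
    assert (Hor : provable S (phi n) \/ provable S (neg (phi n))) by (apply Hcomp; split; auto).
    assert (Hgen : forall q, provable S q -> exists c, vb axb c = true /\ fm c = 8 /\ p2 (cl c) = fcode q).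
    { intros q [G [HG Hnd]].
      destruct (cert_top axb G q Hnd) as [j [J1 [J2 J3]]].
      { intros x Hx. apply in_map_iff in Hx as [y [<- Hy]]. apply HPax. exists y; auto. }
      exists j. rewrite J3, p2_pr. auto. }
    destruct Hor as [Hp|Hp]; destruct (Hgen _ Hp) as [c [C1 [C2 C3]]]; exists c;
      unfold topb; rewrite C1, C2, C3; cbn [andb Nat.eqb].
    - rewrite Hcode, Nat.eqb_refl. reflexivity.
    - rewrite fcode_neg, Hcode, Nat.eqb_refl, orb_true_r. reflexivity. }
  set (X := fun n => provable S (phi n)).
  apply Hno. exists X. split; [|split].
  - exists (rC g [rM f; rP 0]). intro n.
    destruct (T2 n) as [c0 Hc0]. destruct (least_ex (topb n) c0 Hc0) as [m [Hm1 Hm2]].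
    assert (Hev : eval (rC g [rM f; rP 0]) [n] (b2n (p2 (cl m) =? En z s rr n))).
    { econstructor.
      - constructor. apply eM.
        + specialize (Hf [m; n]). cbn [nth] in Hf. rewrite Hm1 in Hf. exact Hf.
        + intros i Hi. exists 0. specialize (Hf [i; n]). cbn [nth] in Hf. rewrite (Hm2 i Hi) in Hf. exact Hf.
        + constructor. constructor. constructor.
      - apply (Hg [m; n]). }
    destruct (T1 n m Hm1) as [[Hp He]|[Hp He]].
    + rewrite He, Nat.eqb_refl in Hev. split; intro HX; auto.
      exfalso. apply HX. exact Hp.
    + split; intro HX.
      * exfalso. apply (Hincons (phi n)); auto.
      * rewrite He in Hev. replace (cneg (En z s rr n) =? En z s rr n) with false in Hev. exact Hev.
        symmetry. apply Nat.eqb_neq. apply cneg_neq.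
  - intros n Hn. apply Hax. cbn. right. left. exists n. auto.
  - intros n Hn HB. apply (Hincons (phi n)); auto.
    apply (Hax (neg (rel 0 [numeral n]))). cbn. right. right. exists n. auto.
Qed.
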